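(* Let $(X,p_X)$ be a non-empty partial metric space. Then there exist a p-Cauchy completion $(\tilde X,j)$ of $X$, a p-Cauchy complete partial metric space $Y$, and an isometric embedding $f\colon X\to Y$ such that there is no isometric embedding $\tilde f\colon\tilde X\to Y$ with $\tilde f\circ j=f$.
   Context: A partial metric on a set $X$ is a function $p_X\colon X\times X\to\mathbb{R}_{\geq0}$ such that for all $x,y,z\in X$: (P1) $p_X(x,x)=p_X(x,y)=p_X(y,y)$ implies $x=y$; (P2) $p_X(x,x)\leq p_X(x,y)$; (P3) $p_X(x,y)=p_X(y,x)$; (P4) $p_X(x,z)+p_X(y,y)\leq p_X(x,y)+p_X(y,z)$. For $x\in X$ and $\varepsilon>0$, $B_\varepsilon(x)=\{y\in X: p_X(x,y)<p_X(x,x)+\varepsilon\}$. A subset $A\subseteq X$ is dense in $X$ if for every $x\in X$ and $\varepsilon>0$ there is $y\in A$ with $y\in B_\varepsilon(x)$. A sequence $(x_n)$ in $X$ p-converges to $x\in X$ if $p_X(x,x)=\lim_{n}p_X(x,x_n)=\lim_{n}p_X(x_n,x_n)$; it is p-Cauchy if $\lim_{n,m\to\infty}p_X(x_n,x_m)$ exists and is finite. $X$ is p-Cauchy complete if every p-Cauchy sequence p-converges. An isometric embedding $i\colon X\to Y$ is a map with $p_Y(i(x),i(y))=p_X(x,y)$ for all $x,y$. A p-Cauchy completion of $X$ is a pair $(\bar X,i)$ where $\bar X$ is a p-Cauchy complete partial metric space and $i\colon X\to\bar X$ is an isometric embedding with $i(X)$ dense in $\bar X$. *)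

(* Defs.v *)
From Stdlib Require Import Reals.
Open Scope R_scope.

Definition is_partial_metric {X : Type} (p : X -> X -> R) : Prop :=
  (forall x y, 0 <= p x y) /\
  (forall x y, p x x = p x y -> p x y = p y y -> x = y) /\
  (forall x y, p x x <= p x y) /\
  (forall x y, p x y = p y x) /\
  (forall x y z, p x z + p y y <= p x y + p y z).

Definition pball {X : Type} (p : X -> X -> R) (x : X) (eps : R) (y : X) : Prop :=
  p x y < p x x + eps.

Definition pdense {X : Type} (p : X -> X -> R) (A : X -> Prop) : Prop :=
  forall x eps, 0 < eps -> exists y, A y /\ pball p x eps y.

Definition p_converges {X : Type} (p : X -> X -> R) (u : nat -> X) (x : X) : Prop :=
  Un_cv (fun n => p x (u n)) (p x x) /\ Un_cv (fun n => p (u n) (u n)) (p x x).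

Definition p_Cauchy {X : Type} (p : X -> X -> R) (u : nat -> X) : Prop :=
  exists a : R, forall eps, 0 < eps -> exists N : nat,
    forall n m, (N <= n)%nat -> (N <= m)%nat -> Rabs (p (u n) (u m) - a) < eps.

Definition p_Cauchy_complete {X : Type} (p : X -> X -> R) : Prop :=
  forall u : nat -> X, p_Cauchy p u -> exists x, p_converges p u x.

Definition isometric_embedding {X Y : Type} (pX : X -> X -> R) (pY : Y -> Y -> R)
  (i : X -> Y) : Prop :=
  forall x y, pY (i x) (i y) = pX x y.

Definition is_p_Cauchy_completion {X Xb : Type} (pX : X -> X -> R) (pXb : Xb -> Xb -> R)
  (i : X -> Xb) : Prop :=
  is_partial_metric pXb /\ p_Cauchy_complete pXb /\ isometric_embedding pX pXb i /\
  pdense pXb (fun z => exists x, i x = z).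

(* Main.v *)
Require Import Defs.
From Stdlib Require Import Reals Lra ClassicalEpsilon ProofIrrelevance FunctionalExtensionality Classical.
Open Scope R_scope.

From Stdlib Require Import Lia.
Definition supR {I : Type} (h : I -> R) : R :=
  epsilon (inhabits 0) (fun m => is_lub (fun r => exists z, r = h z) m).

Lemma supR_lub {I} (h : I -> R) (i0 : I) (M : R) :
  (forall z, h z <= M) -> is_lub (fun r => exists z, r = h z) (supR h).
Proof.
  intros HM. unfold supR. apply epsilon_spec.
  destruct (completeness (fun r => exists z, r = h z)) as [m Hm].
  - exists M. intros r [z ->]. apply HM.
  - exists (h i0), i0. reflexivity.
  - exists m; exact Hm.
Qed.

Lemma supR_ge {I} (h : I -> R) (i0:I) M : (forall z, h z <= M) -> forall z, h z <= supR h.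
Proof. intros HM z. destruct (supR_lub h i0 M HM) as [H _]. apply H. exists z; reflexivity. Qed.

Lemma supR_le {I} (h : I -> R) (i0:I) b : (forall z, h z <= b) -> supR h <= b.
Proof. intros Hb. destruct (supR_lub h i0 b Hb) as [_ H]. apply H. intros r [z ->]. apply Hb. Qed.

Definition infR {I : Type} (h : I -> R) : R := - supR (fun z => - h z).

Lemma infR_le {I} (h : I -> R) (i0:I) m : (forall z, m <= h z) -> forall z, infR h <= h z.
Proof. intros Hm z. unfold infR.
  assert (- h z <= supR (fun z => - h z)). { apply (supR_ge (fun z => - h z) i0 (-m)). intro w. specialize (Hm w). lra. }
  lra. Qed.

Lemma infR_ge {I} (h : I -> R) (i0:I) b : (forall z, b <= h z) -> b <= infR h.
Proof. intros Hb. unfold infR.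
  assert (supR (fun z => - h z) <= - b). { apply (supR_le (fun z => - h z) i0). intro w. specialize (Hb w). lra. }
  lra. Qed.

Lemma infR_approx {I} (h : I -> R) (i0:I) m eps : (forall z, m <= h z) -> 0 < eps -> exists z, h z < infR h + eps.
Proof.
  intros Hm He. apply NNPP; intro Hn.
  assert (infR h + eps <= infR h). { apply (infR_ge h i0); intro z. apply Rnot_lt_le. intro; apply Hn; exists z; lra. } lra.
Qed.

Section PM.
Variable T : Type.
Variable D : T -> T -> R.
Variable W : T -> R.
Hypothesis D0 : forall a, D a a = 0.
Hypothesis Dsym : forall a b, D a b = D b a.
Hypothesis Dtri : forall a b c, D a c <= D a b + D b c.
Hypothesis Dsep : forall a b, D a b = 0 -> a = b.
Hypothesis Wpos : forall a, 0 <= W a.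
Hypothesis Wlip : forall a b, W a - W b <= D a b.

Definition PP a b := (D a b + W a + W b) / 2.

Lemma Dpos a b : 0 <= D a b.
Proof. pose proof (Dtri a b a). rewrite D0, (Dsym b a) in H. lra. Qed.

Lemma PP_pm : is_partial_metric PP.
Proof.
  unfold PP; repeat split.
  - intros x y. pose proof (Dpos x y). pose proof (Wpos x). pose proof (Wpos y). lra.
  - intros x y H1 H2. rewrite D0 in H1. rewrite D0 in H2. apply Dsep.
    pose proof (Dpos x y). lra.
  - intros x y. rewrite D0. pose proof (Wlip x y). lra.
  - intros x y. rewrite Dsym. lra.
  - intros x y z. rewrite D0. pose proof (Dtri x y z). lra.
Qed.

Definition Dcomplete := forall u : nat -> T,
  (forall eps, 0 < eps -> exists N, forall n m, (N <= n)%nat -> (N <= m)%nat -> D (u n) (u m) < eps) ->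
  exists L, Un_cv (fun n => D L (u n)) 0.

Lemma PP_complete : Dcomplete -> p_Cauchy_complete PP.
Proof.
  intros Hc u [a Ha].
  destruct (Hc u) as [L HL].
  - intros eps He. destruct (Ha (eps/4)) as [N HN]; [lra|].
    exists N. intros n m Hn Hm.
    pose proof (HN n m Hn Hm) as A1. pose proof (HN n n Hn Hn) as A2. pose proof (HN m m Hm Hm) as A3.
    unfold PP in *. rewrite D0 in A2, A3.
    apply Rabs_def2 in A1. apply Rabs_def2 in A2. apply Rabs_def2 in A3. lra.
  - exists L. split.
    + intros eps He. destruct (HL eps He) as [N HN]. exists N. intros n Hn.
      specialize (HN n Hn). unfold Rdist in *. unfold PP. rewrite D0.
      pose proof (Dpos L (u n)). rewrite Rminus_0_r, Rabs_right in HN by lra.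
      pose proof (Wlip L (u n)). pose proof (Wlip (u n) L). rewrite Dsym in H1.
      apply Rabs_def1; lra.
    + intros eps He. destruct (HL eps He) as [N HN]. exists N. intros n Hn.
      specialize (HN n Hn). unfold Rdist in *. unfold PP. rewrite !D0.
      pose proof (Dpos L (u n)). rewrite Rminus_0_r, Rabs_right in HN by lra.
      pose proof (Wlip L (u n)). pose proof (Wlip (u n) L). rewrite Dsym in H1.
      apply Rabs_def1; lra.
Qed.
End PM.
Section BFS.
Variable X : Type.
Variable pX : X -> X -> R.
Hypothesis hpX : is_partial_metric pX.
Variable x0 : X.

Definition dX x y := 2 * pX x y - pX x x - pX y y.
Definition wX x := pX x x.

Lemma dX_pos x y : 0 <= dX x y.
Proof. destruct hpX as (_&_&P2&P3&_). unfold dX. pose proof (P2 x y); pose proof (P2 y x); rewrite (P3 y x) in H0. lra. Qed.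
Lemma dX_refl x : dX x x = 0.
Proof. unfold dX; ring. Qed.
Lemma dX_sym x y : dX x y = dX y x.
Proof. destruct hpX as (_&_&_&P3&_). unfold dX. rewrite P3. ring. Qed.
Lemma dX_tri x y z : dX x z <= dX x y + dX y z.
Proof. destruct hpX as (_&_&_&_&P4). unfold dX. pose proof (P4 x y z). lra. Qed.
Lemma wX_lip x y : wX x - wX y <= dX x y.
Proof. destruct hpX as (_&_&P2&_&_). unfold dX, wX. pose proof (P2 x y). lra. Qed.
Lemma wX_pos x : 0 <= wX x.
Proof. destruct hpX as (P0&_). apply P0. Qed.

Definition BF := {f : X -> R | exists M, forall z, Rabs (f z) <= M}.

Definition Dist (f g : BF) : R := supR (fun z => Rabs (proj1_sig f z - proj1_sig g z)).

Lemma bnd2 (f g : BF) : exists M, forall z, Rabs (proj1_sig f z - proj1_sig g z) <= M.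
Proof.
  destruct f as [f [M1 H1]], g as [g [M2 H2]]. exists (M1 + M2). intro z. simpl.
  unfold Rminus. eapply Rle_trans. apply Rabs_triang. rewrite Rabs_Ropp.
  pose proof (H1 z); pose proof (H2 z); lra.
Qed.

Lemma Dist_ge f g z : Rabs (proj1_sig f z - proj1_sig g z) <= Dist f g.
Proof. destruct (bnd2 f g) as [M HM]. exact (supR_ge _ x0 M HM z). Qed.

Lemma Dist_le f g b : (forall z, Rabs (proj1_sig f z - proj1_sig g z) <= b) -> Dist f g <= b.
Proof. intro H. exact (supR_le _ x0 b H). Qed.

Lemma Dist0 f : Dist f f = 0.
Proof.
  apply Rle_antisym.
  - apply Dist_le. intro z. rewrite Rminus_diag_eq, Rabs_R0 by reflexivity. lra.
  - eapply Rle_trans; [apply Rabs_pos | apply (Dist_ge f f x0)].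
Qed.

Lemma Dist_sym f g : Dist f g = Dist g f.
Proof.
  apply Rle_antisym; apply Dist_le; intro z; rewrite Rabs_minus_sym; apply Dist_ge.
Qed.

Lemma Dist_tri f g h : Dist f h <= Dist f g + Dist g h.
Proof.
  apply Dist_le. intro z.
  replace (proj1_sig f z - proj1_sig h z) with ((proj1_sig f z - proj1_sig g z) + (proj1_sig g z - proj1_sig h z)) by ring.
  eapply Rle_trans. apply Rabs_triang. pose proof (Dist_ge f g z). pose proof (Dist_ge g h z). lra.
Qed.

Lemma Dist_sep f g : Dist f g = 0 -> f = g.
Proof.
  intro H. assert (E : forall z, proj1_sig f z = proj1_sig g z).
  { intro z. pose proof (Dist_ge f g z). pose proof (Rabs_pos (proj1_sig f z - proj1_sig g z)).
    assert (Rabs (proj1_sig f z - proj1_sig g z) = 0) by lra.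
    destruct (Rcase_abs (proj1_sig f z - proj1_sig g z)); [rewrite Rabs_left in H2 by lra | rewrite Rabs_right in H2 by lra]; lra. }
  destruct f as [f Hf], g as [g Hg]. simpl in E.
  assert (f = g) by (apply functional_extensionality; exact E). subst g.
  f_equal. apply proof_irrelevance.
Qed.

Lemma Dist_pos f g : 0 <= Dist f g.
Proof. eapply Rle_trans; [apply Rabs_pos | apply (Dist_ge f g x0)]. Qed.

Lemma phi_bnd x : exists M, forall z, Rabs (dX x z - dX x0 z) <= M.
Proof.
  exists (dX x x0). intro z. apply Rabs_le.
  pose proof (dX_tri x x0 z). pose proof (dX_tri x0 x z). rewrite (dX_sym x0 x) in H0. lra.
Qed.

Definition phi (x : X) : BF := exist _ (fun z => dX x z - dX x0 z) (phi_bnd x).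

Lemma Dist_phi x y : Dist (phi x) (phi y) = dX x y.
Proof.
  apply Rle_antisym.
  - apply Dist_le. intro z. simpl. apply Rabs_le.
    pose proof (dX_tri x y z). pose proof (dX_tri y x z). rewrite (dX_sym y x) in H0. lra.
  - pose proof (Dist_ge (phi x) (phi y) y). simpl in H. rewrite dX_refl in H.
    replace (dX x y - dX x0 y - (0 - dX x0 y)) with (dX x y) in H by ring.
    rewrite Rabs_right in H; [lra|]. apply Rle_ge, dX_pos.
Qed.

Definition Wmax (f : BF) : R := infR (fun x => wX x + Dist f (phi x)).

Lemma Wmax_lb f : forall x, 0 <= wX x + Dist f (phi x).
Proof. intro x. pose proof (wX_pos x). pose proof (Dist_pos f (phi x)). lra. Qed.

Lemma Wmax_phi y : Wmax (phi y) = wX y.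
Proof.
  apply Rle_antisym.
  - pose proof (infR_le _ x0 0 (Wmax_lb (phi y)) y). simpl in H. rewrite Dist0 in H. unfold Wmax. lra.
  - apply (infR_ge _ x0). intro x. rewrite Dist_phi. pose proof (wX_lip y x). lra.
Qed.

Lemma Wmax_pos f : 0 <= Wmax f.
Proof. apply (infR_ge _ x0). apply Wmax_lb. Qed.

Lemma Wmax_lip f g : Wmax f - Wmax g <= Dist f g.
Proof.
  assert (Wmax f - Dist f g <= Wmax g).
  { apply (infR_ge _ x0). intro x. pose proof (infR_le _ x0 0 (Wmax_lb f) x). simpl in H.
    pose proof (Dist_tri f g (phi x)). unfold Wmax. lra. }
  lra.
Qed.

Definition Sm (f : BF) : R := supR (fun x => wX x - Dist f (phi x)).
Definition Wmin (f : BF) : R := Rmax 0 (Sm f).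

Lemma Sm_ub f : forall x, wX x - Dist f (phi x) <= wX x0 + Dist f (phi x0).
Proof.
  intro x. pose proof (wX_lip x x0). rewrite dX_sym, <- Dist_phi in H.
  pose proof (Dist_tri (phi x0) f (phi x)). rewrite (Dist_sym (phi x0) f) in H0. lra.
Qed.

Lemma Sm_phi y : Sm (phi y) = wX y.
Proof.
  apply Rle_antisym.
  - apply (supR_le _ x0). intro x. rewrite Dist_phi. pose proof (wX_lip x y). rewrite dX_sym in H. lra.
  - pose proof (supR_ge _ x0 _ (Sm_ub (phi y)) y). simpl in H. rewrite Dist0 in H. unfold Sm. lra.
Qed.

Lemma Wmin_phi y : Wmin (phi y) = wX y.
Proof. unfold Wmin. rewrite Sm_phi. apply Rmax_right, wX_pos. Qed.

Lemma Wmin_pos f : 0 <= Wmin f.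
Proof. apply Rmax_l. Qed.

Lemma Wmin_lip f g : Wmin f - Wmin g <= Dist f g.
Proof.
  assert (Sm f <= Sm g + Dist f g).
  { apply (supR_le _ x0). intro x. pose proof (supR_ge _ x0 _ (Sm_ub g) x). simpl in H.
    pose proof (Dist_tri g f (phi x)). rewrite (Dist_sym g f) in H0. unfold Sm. lra. }
  pose proof (Dist_pos f g). unfold Wmin, Rmax.
  destruct (Rle_dec 0 (Sm f)); destruct (Rle_dec 0 (Sm g)); lra.
Qed.

Lemma BF_complete : Dcomplete BF Dist.
Proof.
  intros u Hu.
  assert (Hc : forall z, Cauchy_crit (fun n => proj1_sig (u n) z)).
  { intros z eps He. destruct (Hu eps He) as [N HN]. exists N. intros n m Hn Hm.
    unfold Rdist. eapply Rle_lt_trans. apply (Dist_ge (u n) (u m) z). apply HN; lia. }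
  set (L := fun z => proj1_sig (R_complete _ (Hc z))).
  assert (HL : forall z, Un_cv (fun n => proj1_sig (u n) z) (L z)).
  { intro z. unfold L. destruct (R_complete _ (Hc z)) as [l Hl]. exact Hl. }
  assert (Hpt : forall eps, 0 < eps -> exists N, forall n, (N <= n)%nat -> forall z, Rabs (proj1_sig (u n) z - L z) < eps).
  { intros eps He. destruct (Hu (eps/2)) as [N HN]; [lra|]. exists N. intros n Hn z.
    destruct (HL z (eps/2)) as [N' HN']; [lra|].
    pose proof (HN' (max N N') ltac:(lia)). unfold Rdist in H.
    pose proof (HN n (max N N') Hn ltac:(lia)). pose proof (Dist_ge (u n) (u (max N N')) z).
    replace (proj1_sig (u n) z - L z) with ((proj1_sig (u n) z - proj1_sig (u (max N N')) z) + (proj1_sig (u (max N N')) z - L z)) by ring.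
    eapply Rle_lt_trans. apply Rabs_triang. lra. }
  assert (Lb : exists M, forall z, Rabs (L z) <= M).
  { destruct (Hpt 1) as [N HN]; [lra|]. destruct (proj2_sig (u N)) as [M HM].
    exists (M + 1). intro z. pose proof (HN N (le_n _) z). pose proof (HM z).
    replace (L z) with (proj1_sig (u N) z - (proj1_sig (u N) z - L z)) by ring.
    unfold Rminus at 1. eapply Rle_trans. apply Rabs_triang. rewrite Rabs_Ropp. lra. }
  exists (exist _ L Lb). intros eps He. destruct (Hpt (eps/2)) as [N HN]; [lra|].
  exists N. intros n Hn. unfold Rdist. rewrite Rminus_0_r.
  pose proof (Dist_pos (exist _ L Lb) (u n)).
  rewrite Rabs_right by lra.
  assert (Dist (exist _ L Lb) (u n) <= eps/2).
  { apply Dist_le. intro z. simpl. rewrite Rabs_minus_sym. left. apply HN. exact Hn. }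
  lra.
Qed.

End BFS.

Theorem theorem1p9 (X : Type) (pX : X -> X -> R)
  (hpX : is_partial_metric pX) (hne : inhabited X) :
  exists (Xt : Type) (pXt : Xt -> Xt -> R) (j : X -> Xt),
    is_p_Cauchy_completion pX pXt j /\
    exists (Y : Type) (pY : Y -> Y -> R) (f : X -> Y),
      is_partial_metric pY /\ p_Cauchy_complete pY /\
      isometric_embedding pX pY f /\
      ~ (exists ft : Xt -> Y, isometric_embedding pXt pY ft /\
                              forall x, ft (j x) = f x).
Proof.
  destruct hne as [x0].
  pose proof (Dist0 X x0) as D0. pose proof (Dist_sym X x0) as Ds.
  pose proof (Dist_tri X x0) as Dt. pose proof (Dist_sep X x0) as Dp.
  assert (Hiso : forall W : BF X -> R, (forall y, W (phi X pX hpX x0 y) = wX X pX y) ->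
     isometric_embedding pX (PP (BF X) (Dist X) W) (phi X pX hpX x0)).
  { intros W HW x y. unfold PP. rewrite Dist_phi, !HW by exact hpX. unfold dX, wX. lra. }
  exists (BF X), (PP _ (Dist X) (Wmax X pX hpX x0)), (phi X pX hpX x0).
  split; [unfold is_p_Cauchy_completion; split; [|split; [|split]]|].
  - apply PP_pm; auto. apply Wmax_pos; auto. apply Wmax_lip; auto.
  - apply PP_complete; auto; [try (apply Wmax_lip; auto); try (apply Wmin_lip; auto) | apply (BF_complete X x0)].
  - apply Hiso. apply Wmax_phi; auto.
  - intros f eps He. destruct (infR_approx (fun x => wX X pX x + Dist X f (phi X pX hpX x0 x)) x0 0 (2*eps)
      (Wmax_lb X pX hpX x0 f)) as [x Hx]; [lra|].
    exists (phi X pX hpX x0 x). split; [exists x; reflexivity|].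
    unfold pball, PP. rewrite D0, Wmax_phi by exact hpX. unfold Wmax in *. lra.
  - exists (BF X), (PP _ (Dist X) (Wmin X pX hpX x0)), (phi X pX hpX x0).
    split; [|split; [|split]].
    + apply PP_pm; auto. apply Wmin_pos. apply Wmin_lip; auto.
    + apply PP_complete; auto; [try (apply Wmax_lip; auto); try (apply Wmin_lip; auto) | apply (BF_complete X x0)].
    + apply Hiso. apply Wmin_phi; auto.
    + intros [ft [Hft Hext]].
      set (C := wX X pX x0 + 1).
      assert (cb : exists M, forall z : X, Rabs ((fun _ => C) z) <= M) by (exists (Rabs C); intro; lra).
      set (cC := exist _ (fun _ : X => C) cb : BF X).
      assert (HC : forall x, C + dX X pX x0 x <= Dist X cC (phi X pX hpX x0 x)).
      { intro x. pose proof (Dist_ge X x0 cC (phi X pX hpX x0 x) x). simpl in H.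
        rewrite dX_refl in H. replace (C - (0 - dX X pX x0 x)) with (C + dX X pX x0 x) in H by ring.
        rewrite Rabs_right in H; [lra|]. pose proof (dX_pos X pX hpX x0 x). pose proof (wX_pos X pX hpX x0). unfold C. lra. }
      set (g := ft cC).
      pose proof (Hft cC cC) as E1. unfold PP in E1. fold g in E1. rewrite !D0 in E1.
      assert (E2 : forall x, Dist X g (phi X pX hpX x0 x) = Dist X cC (phi X pX hpX x0 x)).
      { intro x. pose proof (Hft cC (phi X pX hpX x0 x)) as E. rewrite Hext in E. unfold PP in E. fold g in E.
        rewrite Wmin_phi, Wmax_phi in E by exact hpX. lra. }
      assert (Sm X pX hpX x0 g <= -1).
      { apply (supR_le _ x0). intro x. rewrite E2. pose proof (HC x). pose proof (wX_lip X pX hpX x x0).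
        rewrite dX_sym in H0 by exact hpX. unfold C in H. lra. }
      assert (Wmin X pX hpX x0 g = 0). { unfold Wmin, Rmax. destruct (Rle_dec 0 (Sm X pX hpX x0 g)); lra. }
      assert (1 <= Wmax X pX hpX x0 cC).
      { apply (infR_ge _ x0). intro x. pose proof (HC x). pose proof (wX_pos X pX hpX x).
        pose proof (dX_pos X pX hpX x0 x). pose proof (wX_pos X pX hpX x0). unfold C in H1. lra. }
      lra.
Qed.
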